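(* Let $L$ be a primitive $\mathbb{Z}_2$-lattice of rank at least $4$. If $L$ is of type A, then $B(\mathbf x,\mathbf y)\in 2^{\nu_2(L)-2}\mathbb{Z}_2$ for all $\mathbf x,\mathbf y\in L$ with $\mathrm{ord}_2(Q(\mathbf x))=\mathrm{ord}_2(Q(\mathbf y))=\nu_2(L)$.
   Context: A $\mathbb{Z}_2$-lattice is a free $\mathbb{Z}_2$-module of finite rank with a non-degenerate symmetric bilinear form $B$ with values in $\mathbb{Z}_2$; $Q(\mathbf x)=B(\mathbf x,\mathbf x)$. Scale $\mathfrak sL$ = ideal generated by all $B(\mathbf x,\mathbf y)$; norm $\mathfrak nL$ = ideal generated by all $Q(\mathbf x)$; primitive means $\mathfrak sL=\mathbb{Z}_2$. Let $SC_2=\{1,3,5,7,2,6,10,14\}$. For $L$ of rank $\ge4$ and $s\in SC_2$, let $u\ge0$ be least with $s4^u=Q(\mathbf x)$ for some $\mathbf x\in L$; $\nu_{2,s}(L)=\mathrm{ord}_2(s4^u)$; $\nu_2(L)=\max_s\nu_{2,s}(L)$. A primitive $\mathbb{Z}_2$-lattice $L$ of rank $\ge4$ is of type A if there is a Jordan decomposition $L=\ell_1\perp\cdots\perp\ell_k$ with $\mathbb{Z}_2=\mathfrak s(\ell_1)\supsetneq\cdots\supsetneq\mathfrak s(\ell_k)$ and a positive integer $t$ such that $\ell_1\perp\cdots\perp\ell_{t-1}$ is an anisotropic ternary $\mathbb{Z}_2$-lattice and $\mathfrak n\ell_t\subseteq 8\,\mathfrak s\ell_{t-1}$. *)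

(* Defs.v *)
(* The ring Z_2 of 2-adic integers is constructed here as the
   inverse limit of the rings Z/2^k Z (coherent sequences of canonical residues). *)
From HB Require Import structures.
From mathcomp Require Import all_boot all_order all_algebra.
From mathcomp Require Import boolp zify.

Set Implicit Arguments.
Unset Strict Implicit.
Unset Printing Implicit Defensive.
Import GRing.Theory.

Definition coherent (f : nat -> nat) : Prop :=
  forall k, f k < 2 ^ k /\ f k.+1 %% 2 ^ k = f k.

Record Z2 := MkZ2 { z2seq : nat -> nat ; z2coh : coherent z2seq }.

HB.instance Definition _ := gen_eqMixin Z2.
HB.instance Definition _ := gen_choiceMixin Z2.

Lemma Z2_inj (a b : Z2) : z2seq a = z2seq b -> a = b.
Proof.
case: a b => [f hf] [g hg] /= efg; subst g.
by rewrite (Prop_irrelevance hf hg).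
Qed.

Lemma Z2_ext (a b : Z2) : (forall k, z2seq a k = z2seq b k) -> a = b.
Proof. by move=> h; apply: Z2_inj; apply: funext. Qed.

Lemma z2lt (a : Z2) k : z2seq a k < 2 ^ k.
Proof. by case: (z2coh a k). Qed.

Lemma z2mod (a : Z2) k : z2seq a k.+1 %% 2 ^ k = z2seq a k.
Proof. by case: (z2coh a k). Qed.

Lemma dvd2S k : 2 ^ k %| 2 ^ k.+1.
Proof. by rewrite expnS dvdn_mull. Qed.

Lemma expn2_gt0 k : 0 < 2 ^ k.
Proof. by rewrite expn_gt0. Qed.

Lemma coh_lift (g : nat -> nat) :
  (forall k, g k.+1 %% 2 ^ k = g k %% 2 ^ k) ->
  coherent (fun k => g k %% 2 ^ k).
Proof.
move=> h k; split; first by rewrite ltn_mod expn2_gt0.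
by rewrite modn_dvdm ?dvd2S // h.
Qed.

Definition z2zero : Z2 := MkZ2 (coh_lift (g := fun _ => 0) (fun k => erefl)).

Lemma add_coh (a b : Z2) :
  forall k, (z2seq a k.+1 + z2seq b k.+1) %% 2 ^ k
            = (z2seq a k + z2seq b k) %% 2 ^ k.
Proof. by move=> k; rewrite -modnDm !z2mod. Qed.

Definition z2add (a b : Z2) : Z2 := MkZ2 (coh_lift (add_coh a b)).

Lemma mul_coh (a b : Z2) :
  forall k, (z2seq a k.+1 * z2seq b k.+1) %% 2 ^ k
            = (z2seq a k * z2seq b k) %% 2 ^ k.
Proof. by move=> k; rewrite -modnMm !z2mod. Qed.

Definition z2mul (a b : Z2) : Z2 := MkZ2 (coh_lift (mul_coh a b)).

Lemma one_coh : forall k, 1 %% 2 ^ k = 1 %% 2 ^ k.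
Proof. by []. Qed.

Definition z2one : Z2 := MkZ2 (coh_lift (g := fun _ => 1) one_coh).

Lemma opp_coh (a : Z2) :
  forall k, (2 ^ k.+1 - z2seq a k.+1) %% 2 ^ k = (2 ^ k - z2seq a k) %% 2 ^ k.
Proof.
move=> k; rewrite -(z2mod a k).
set p := 2 ^ k; set x := z2seq a k.+1.
have hx : x < 2 * p by rewrite /x /p -expnS z2lt.
have hp : 0 < p by rewrite /p expn2_gt0.
rewrite expnS -/p.
have [lt_xp | le_px] := ltnP x p.
  rewrite (modn_small lt_xp) mul2n -addnn -addnBA; last exact: ltnW.
  by rewrite modnDl.
have -> : x %% p = x - p.
  by rewrite -{1}(subnK le_px) modnDr modn_small // ltn_subLR // addnn -mul2n.
congr (_ %% _); lia.
Qed.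

Definition z2opp (a : Z2) : Z2 := MkZ2 (coh_lift (opp_coh a)).

Lemma z2addA : associative z2add.
Proof.
by move=> a b c; apply: Z2_ext => k /=; rewrite modnDml modnDmr addnA.
Qed.

Lemma z2addC : commutative z2add.
Proof. by move=> a b; apply: Z2_ext => k /=; rewrite addnC. Qed.

Lemma z2add0 : left_id z2zero z2add.
Proof. by move=> a; apply: Z2_ext => k /=; rewrite mod0n add0n modn_small ?z2lt. Qed.

Lemma z2addN : left_inverse z2zero z2opp z2add.
Proof.
move=> a; apply: Z2_ext => k /=.
by rewrite modnDml subnK ?modnn ?mod0n // ltnW ?z2lt.
Qed.

HB.instance Definition _ :=
  GRing.isZmodule.Build Z2 z2addA z2addC z2add0 z2addN.

Lemma z2mulA : associative z2mul.
Proof.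
by move=> a b c; apply: Z2_ext => k /=; rewrite modnMml modnMmr mulnA.
Qed.

Lemma z2mulC : commutative z2mul.
Proof. by move=> a b; apply: Z2_ext => k /=; rewrite mulnC. Qed.

Lemma z2mul1 : left_id z2one z2mul.
Proof. by move=> a; apply: Z2_ext => k /=; rewrite modnMml mul1n modn_small ?z2lt. Qed.

Lemma z2mulDl : left_distributive z2mul z2add.
Proof.
by move=> a b c; apply: Z2_ext => k /=; rewrite modnMml mulnDl modnDm.
Qed.

Lemma z2one_neq0 : z2one != z2zero.
Proof.
apply/eqP => /(f_equal (fun a => z2seq a 1)) /=.
by [].
Qed.

HB.instance Definition _ :=
  GRing.Zmodule_isComNzRing.Build Z2 z2mulA z2mulC z2mul1 z2mulDl z2one_neq0.

(** A Z_2-lattice of rank n is modelled, through a fixed basis, as the free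
   module 'rV[Z2]_n with bilinear form B(x,y) = x G y^T, for a symmetric Gram
   matrix G : 'M[Z2]_n. *)

Local Open Scope ring_scope.

Definition bform n (G : 'M[Z2]_n) (x y : 'rV[Z2]_n) : Z2 := (x *m G *m y^T) 0 0.

Definition qform n (G : 'M[Z2]_n) (x : 'rV[Z2]_n) : Z2 := bform G x x.

Definition nondeg_form n (G : 'M[Z2]_n) : Prop :=
  forall x : 'rV[Z2]_n, (forall y, bform G x y = 0) -> x = 0.

Definition ideal_gen (S : Z2 -> Prop) (a : Z2) : Prop :=
  exists (m : nat) (c s : 'I_m -> Z2),
    (forall i, S (s i)) /\ a = \sum_(i < m) c i * s i.

Definition ideal_sub (I J : Z2 -> Prop) : Prop := forall a, I a -> J a.
Definition ideal_eq (I J : Z2 -> Prop) : Prop := forall a, I a <-> J a.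
Definition ideal_ssub (I J : Z2 -> Prop) : Prop :=
  ideal_sub I J /\ ~ ideal_sub J I.
Definition whole_Z2 : Z2 -> Prop := fun _ => True.

Definition ideal_scale (c : Z2) (I : Z2 -> Prop) (a : Z2) : Prop :=
  exists b, I b /\ a = c * b.

Definition in2pow (m : nat) (a : Z2) : Prop := exists b : Z2, a = (2 ^ m)%N%:R * b.

Definition has_ord2 (a : Z2) (m : nat) : Prop := in2pow m a /\ ~ in2pow m.+1 a.

Definition scale_of n (G : 'M[Z2]_n) (V : 'rV[Z2]_n -> Prop) : Z2 -> Prop :=
  ideal_gen (fun a => exists x y, [/\ V x, V y & a = bform G x y]).

Definition norm_of n (G : 'M[Z2]_n) (V : 'rV[Z2]_n -> Prop) : Z2 -> Prop :=
  ideal_gen (fun a => exists x, V x /\ a = qform G x).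

Definition wholeL n : 'rV[Z2]_n -> Prop := fun _ => True.

Definition primitive_lat n (G : 'M[Z2]_n) : Prop :=
  ideal_eq (scale_of G (@wholeL n)) whole_Z2.

Definition is_basis n (E : 'M[Z2]_n) : Prop :=
  exists F : 'M[Z2]_n, F *m E = 1%:M /\ E *m F = 1%:M.

Definition span_of n (E : 'M[Z2]_n) (P : pred 'I_n) (x : 'rV[Z2]_n) : Prop :=
  exists c : 'rV[Z2]_n, (forall a, ~~ P a -> c 0 a = 0) /\ x = c *m E.

Definition modular_block n (G : 'M[Z2]_n) (E : 'M[Z2]_n) (P : pred 'I_n) : Prop :=
  exists (r : nat) (U : 'M[Z2]_#|P|),
    (exists M : 'M[Z2]_#|P|, M *m U = 1%:M /\ U *m M = 1%:M) /\
    forall p q : 'I_#|P|,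
      bform G (row (enum_val p) E) (row (enum_val q) E) = (2 ^ r)%N%:R * U p q.

(* the i-th Jordan jcomp (0-based: jcomp i is l_{i+1} of the paper) *)
Definition jcomp n (E : 'M[Z2]_n) (blk : 'I_n -> nat) (i : nat) :=
  span_of E [pred a | blk a == i].

(* L = l_1 _|_ ... _|_ l_k is a Jordan decomposition with
   Z_2 = s l_1 ⊋ s l_2 ⊋ ... ⊋ s l_k.  The basis E is adapted to the splitting:
   l_{i+1} is spanned by the rows row a E with blk a = i. *)
Definition jordan_decomp n (G : 'M[Z2]_n) (E : 'M[Z2]_n) (k : nat)
    (blk : 'I_n -> nat) : Prop :=
  [/\ is_basis E,
      (forall a, (blk a < k)%N) /\ (forall i, (i < k)%N -> exists a, blk a = i),
      forall a b, blk a != blk b -> bform G (row a E) (row b E) = 0,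
      forall i, (i < k)%N -> modular_block G E [pred a | blk a == i] &
      ideal_eq (scale_of G (jcomp E blk 0)) whole_Z2 /\
      forall i, (i.+1 < k)%N ->
        ideal_ssub (scale_of G (jcomp E blk i.+1))
                   (scale_of G (jcomp E blk i))].

(* Type A (1-based t of the paper; components l_1..l_{t-1} are those with
   blk < t-1, l_t is jcomp t-1, l_{t-1} is jcomp t-2). *)
Definition typeA n (G : 'M[Z2]_n) : Prop :=
  exists (E : 'M[Z2]_n) (k : nat) (blk : 'I_n -> nat) (t : nat),
    [/\ jordan_decomp G E k blk,
        (0 < t <= k)%N,
        (* l_1 _|_ ... _|_ l_{t-1} is ternary ... *)
        #|[pred a | (blk a < t.-1)%N]| = 3%N,
        (forall x, span_of E [pred a | (blk a < t.-1)%N] x ->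
                   qform G x = 0 -> x = 0) &
        ideal_sub (norm_of G (jcomp E blk t.-1))
                  (ideal_scale 8%:R (scale_of G (jcomp E blk t.-2)))].

Definition SC2 : seq nat := [:: 1; 3; 5; 7; 2; 6; 10; 14]%N.

Definition represents_nat n (G : 'M[Z2]_n) (c : nat) : Prop :=
  exists x : 'rV[Z2]_n, qform G x = c%:R.

Definition is_nu2s n (G : 'M[Z2]_n) (s v : nat) : Prop :=
  exists u : nat,
    [/\ represents_nat G (s * 4 ^ u)%N,
        forall u', (u' < u)%N -> ~ represents_nat G (s * 4 ^ u')%N &
        v = logn 2 (s * 4 ^ u)].

Definition is_nu2 n (G : 'M[Z2]_n) (v : nat) : Prop :=
  (exists2 s, s \in SC2 & is_nu2s G s v) /\
  (forall s w, s \in SC2 -> is_nu2s G s w -> (w <= v)%N).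

(* Main.v *)
Require Import Defs.
From HB Require Import structures.
From mathcomp Require Import all_boot all_order all_algebra.
From mathcomp Require Import zify ring.
Import GRing.Theory.
Local Open Scope ring_scope.

Lemma z2seq_add (a b : Z2) k : z2seq (a + b) k = ((z2seq a k + z2seq b k) %% 2 ^ k)%N.
Proof. by []. Qed.
Lemma z2seq_mul (a b : Z2) k : z2seq (a * b) k = ((z2seq a k * z2seq b k) %% 2 ^ k)%N.
Proof. by []. Qed.
Lemma z2seq_opp (a : Z2) k : z2seq (- a) k = ((2 ^ k - z2seq a k) %% 2 ^ k)%N.
Proof. by []. Qed.
Lemma z2seq_one k : z2seq (1 : Z2) k = (1 %% 2 ^ k)%N.
Proof. by []. Qed.
Lemma z2seq_zero k : z2seq (0 : Z2) k = (0 %% 2 ^ k)%N.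
Proof. by []. Qed.

Lemma z2seq_nat m k : z2seq (m%:R : Z2) k = (m %% 2 ^ k)%N.
Proof.
elim: m => [|m IH]; first by rewrite z2seq_zero.
by rewrite mulrS z2seq_add IH z2seq_one modnDm.
Qed.

Definition eqm k (a b : Z2) := z2seq a k = z2seq b k.

Lemma eqm0 a b : eqm 0 a b.
Proof. by rewrite /eqm; have := z2lt a 0; have := z2lt b 0; rewrite expn0; lia. Qed.

Lemma eqmD k a b c d : eqm k a b -> eqm k c d -> eqm k (a + c) (b + d).
Proof. by rewrite /eqm !z2seq_add => -> ->. Qed.
Lemma eqmM k a b c d : eqm k a b -> eqm k c d -> eqm k (a * c) (b * d).
Proof. by rewrite /eqm !z2seq_mul => -> ->. Qed.
Lemma eqmN k a b : eqm k a b -> eqm k (- a) (- b).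
Proof. by rewrite /eqm !z2seq_opp => ->. Qed.
Lemma eqmS k a b : eqm k.+1 a b -> eqm k a b.
Proof. by rewrite /eqm -(z2mod a k) -(z2mod b k) => ->. Qed.

Lemma z2seq_coh (a : Z2) j i : (z2seq a (j + i) %% 2 ^ j)%N = z2seq a j.
Proof.
elim: i => [|i IH]; first by rewrite addn0 modn_small ?z2lt.
rewrite addnS -(modn_dvdm _ (dvdn_exp2l 2 (leq_addr i j))) z2mod //.
Qed.

Lemma in2pow_seq k d : in2pow k d <-> z2seq d k = 0%N.
Proof.
split.
  by case=> b ->; rewrite z2seq_mul z2seq_nat modnn mul0n mod0n.
move=> hd.
have coh : coherent (fun j => z2seq d (j + k) %/ 2 ^ k)%N.
  move=> j; split.
    by rewrite ltn_divLR ?expn2_gt0 // -expnD z2lt.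
  rewrite modn_divl -expnD addSn z2mod //.
exists (MkZ2 coh); apply: Z2_ext => j.
rewrite z2seq_mul z2seq_nat /= modnMml.
have hdiv : (2 ^ k %| z2seq d (j + k))%N.
  by rewrite /dvdn addnC z2seq_coh hd.
by rewrite mulnC divnK // z2seq_coh.
Qed.

Lemma eqm_in2pow k a b : eqm k a b <-> in2pow k (a - b).
Proof.
rewrite in2pow_seq /eqm; split=> h.
  rewrite z2seq_add h -z2seq_add subrr z2seq_zero mod0n //.
have : eqm k (a - b + b) (0 + b).
  by apply: eqmD => //; rewrite /eqm h z2seq_zero mod0n.
by rewrite subrK add0r.
Qed.

Lemma eqm_all a b : (forall k, eqm k a b) -> a = b.
Proof. by move=> h; apply: Z2_ext. Qed.

Lemma fixpt (f : Z2 -> Z2) :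
  (forall k a b, eqm k a b -> eqm k.+1 (f a) (f b)) -> exists mu, f mu = mu.
Proof.
move=> hf.
pose p k := iter k f 0.
have hp : forall k, eqm k (p k) (p k.+1).
  elim=> [|k IH]; first exact: eqm0.
  by apply: hf.
have coh : coherent (fun k => z2seq (p k) k).
  move=> k; split; first exact: z2lt.
  by rewrite z2mod; symmetry; apply: hp.
exists (MkZ2 coh); apply: eqm_all => k.
case: k => [|k]; first exact: eqm0.
have h1 : eqm k.+1 (f (MkZ2 coh)) (f (p k)) by apply: hf.
rewrite /eqm h1 /=; by [].
Qed.

Lemma bformDl n (G : 'M[Z2]_n) x y z : bform G (x + y) z = bform G x z + bform G y z.
Proof. by rewrite /bform !mulmxDl mxE. Qed.
Lemma bformDr n (G : 'M[Z2]_n) x y z : bform G x (y + z) = bform G x y + bform G x z.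
Proof. by rewrite /bform linearD /= mulmxDr mxE. Qed.
Lemma bformZl n (G : 'M[Z2]_n) c x z : bform G (c *: x) z = c * bform G x z.
Proof. by rewrite /bform -!scalemxAl mxE. Qed.
Lemma bformZr n (G : 'M[Z2]_n) c x z : bform G x (c *: z) = c * bform G x z.
Proof. by rewrite /bform linearZ /= -!scalemxAr mxE. Qed.
Lemma bformC n (G : 'M[Z2]_n) x y : G^T = G -> bform G x y = bform G y x.
Proof.
move=> hG; rewrite /bform.
transitivity ((x *m G *m y^T)^T 0 0); first by rewrite [RHS]mxE.
by rewrite !trmx_mul trmxK hG mulmxA.
Qed.

Lemma qformD n (G : 'M[Z2]_n) x y c : G^T = G ->
  qform G (x + c *: y) = qform G x + c * (2 * bform G x y) + c ^+ 2 * qform G y.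
Proof.
move=> hG; rewrite /qform !(bformDl, bformDr, bformZl, bformZr) (@bformC n G y x hG).
ring.
Qed.

From Stdlib Require Import Classical.

Lemma find_w (P : nat -> Prop) m : P 0%N -> ~ P m -> exists w, (w < m)%N /\ P w /\ ~ P w.+1.
Proof.
move=> h0; elim: m => [|m IH] hm; first by [].
case: (classic (P m)) => hPm; first by exists m.
by have [w [? ?]] := IH hPm; exists w; split => //; apply: ltnW.
Qed.

Lemma SC2_logn s : s \in SC2 -> (0 < s)%N /\ (logn 2 s <= 1)%N.
Proof.
move=> hs; have : all (fun s => (0 < s)%N && (logn 2 s <= 1)%N) SC2 by [].
by move/allP/(_ s hs)/andP.
Qed.

Theorem lemma2p9 (n : nat) (G : 'M[Z2]_n) :
  (4 <= n)%N -> trmx G = G -> nondeg_form G -> primitive_lat G -> typeA G ->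
  forall v : nat, is_nu2 G v ->
  forall x y : 'rV[Z2]_n,
    has_ord2 (qform G x) v -> has_ord2 (qform G y) v ->
    in2pow (v - 2)%N (bform G x y).
Proof.
move=> _ hG _ _ _ v [[s hs [u [_ hmin hv]]] _] x y [[al hal] _] [[ka hka] _].
case: (classic (in2pow (v - 2)%N (bform G x y))) => // hB; exfalso.
have h0 : in2pow 0 (bform G x y) by exists (bform G x y); rewrite expn0 mul1r.
have [w [hwv [[be hbe] hw1]]] := @find_w (fun k => in2pow k (bform G x y)) _ h0 hB.
have hbe1 : ~ in2pow 1 be.
  case=> g hg; apply: hw1; exists g.
  by rewrite hbe hg mulrA -natrM -expnSr.
have [e1 he1] : in2pow 1 (1 - be).
  apply/eqm_in2pow; rewrite /eqm z2seq_one.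
  move: hbe1; rewrite in2pow_seq; have := z2lt be 1; rewrite expn1; lia.
have [s0 sl] := SC2_logn _ hs.
have hlog : logn 2 (s * 4 ^ u) = (logn 2 s + 2 * u)%N.
  by rewrite lognM ?expn_gt0 // lognX mulnC.
rewrite hlog in hv.
set u' := u.-1.
have hu : (u' < u)%N by rewrite /u'; lia.
apply: (hmin u' hu).
have hdv : (2 ^ w.+1 %| s * 4 ^ u')%N.
  rewrite pfactor_dvdn ?muln_gt0 ?expn_gt0 ?s0 // lognM ?expn_gt0 // lognX.
  rewrite /u'; change (logn 2 4) with 2%N; lia.
set tau := (s * 4 ^ u' %/ 2 ^ w.+1)%N.
have htau : (s * 4 ^ u' = tau * 2 ^ w.+1)%N by rewrite divnK.
set d := (v - w.+1)%N.
have hvd : (2 ^ v = 2 ^ w * 2 * (2 * 2 ^ d.-1))%N.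
  have -> : v = (w + (d.-1).+2)%N by rewrite /d; lia.
  by rewrite expnD !expnS; nia.
set P := ((2 ^ w)%N%:R : Z2).
set D' := ((2 ^ d.-1)%N%:R : Z2).
set T := (tau%:R : Z2).
pose f (m : Z2) := m - (2%:R * D' * al - T + be * m + 2%:R * D' * ka * m ^+ 2).
have [mu hmu] : exists mu, f mu = mu.
  apply: fixpt => k a b /eqm_in2pow [g hg]; apply/eqm_in2pow.
  exists (g * (e1 - D' * ka * (a + b))).
  have -> : f a - f b = (a - b) * ((1 - be) - 2%:R * D' * ka * (a + b)) by rewrite /f; ring.
  rewrite hg he1 expn1 (expnS 2 k) natrM; ring.
have hX : 2%:R * D' * al - T + be * mu + 2%:R * D' * ka * mu ^+ 2 = 0.
  have -> : 2%:R * D' * al - T + be * mu + 2%:R * D' * ka * mu ^+ 2 = mu - f mu by rewrite /f; ring.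
  by rewrite hmu subrr.
exists (x + mu *: y).
rewrite qformD // hal hka hbe htau hvd !natrM -/P -/D' -/T.
have -> : (2 ^ w.+1)%N%:R = P * 2%:R :> Z2 by rewrite expnSr natrM.
rewrite -[LHS]subr0 -(mulr0 (P * 2%:R)) -hX; ring.
Qed.
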